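(* Let $m\le n$, $a>0$, $\lambda>0$, and let $Y\in\mathbb{R}^{m\times n}$ have singular value decomposition $Y = U\,\mathrm{Diag}(\sigma)\,V^T$ with $\sigma=(\sigma_1,\dots,\sigma_m)$, $\sigma_1\ge\dots\ge\sigma_m\ge0$, $U,V$ orthogonal. Then $$X^s = G_{\lambda,a}(Y) := U\,\mathrm{Diag}\big(g_{\lambda,a}(\sigma_1),\dots,g_{\lambda,a}(\sigma_m)\big)\,V^T$$ is a global minimizer of $\min_{X\in\mathbb{R}^{m\times n}} \tfrac12\|X-Y\|_F^2+\lambda T(X)$.
   Context: For $a>0$, $\rho_a(x)=\frac{(a+1)x}{a+x}$ for $x\ge0$. The transformed Schatten-1 penalty of $X\in\mathbb{R}^{m\times n}$ is $T(X)=\sum_{i=1}^{\mathrm{rank}(X)}\rho_a(\sigma_i(X))$, where $\sigma_i(X)$ are the singular values of $X$. For $\lambda>0$ define, with $\mathrm{sgn}(0)=0$, $$h_\lambda(x)=\mathrm{sgn}(x)\left\{\tfrac23(a+|x|)\cos\!\big(\tfrac{\varphi(x)}{3}\big)-\tfrac{2a}{3}+\tfrac{|x|}{3}\right\},\qquad \varphi(x)=\arccos\!\Big(1-\frac{27\lambda a(a+1)}{2(a+|x|)^3}\Big),$$ and the threshold $t=\lambda\frac{a+1}{a}$ if $\lambda\le\frac{a^2}{2(a+1)}$, and $t=\sqrt{2\lambda(a+1)}-\frac a2$ if $\lambda>\frac{a^2}{2(a+1)}$. The scalar thresholding function is $g_{\lambda,a}(w)=0$ if $|w|\le t$ and $g_{\lambda,a}(w)=h_\lambda(w)$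 if $|w|>t$. (It is known that $g_{\lambda,a}(x)$ is a minimizer of $y\mapsto\frac12(y-x)^2+\lambda\rho_a(|y|)$ over $y\in\mathbb{R}$.) $\|\cdot\|_F$ is the Frobenius norm. *)

(* Defs.v *)
From Stdlib Require Import Reals Lra.
Open Scope R_scope.

(* Matrices are represented as functions nat -> nat -> R; only the entries
   with indices below the stated dimensions are ever relevant. *)
Definition Mat := nat -> nat -> R.

Fixpoint rsum (n : nat) (f : nat -> R) : R :=
  match n with O => 0 | S k => rsum k f + f k end.

Definition mmul (p : nat) (A B : Mat) : Mat :=
  fun i j => rsum p (fun l => A i l * B l j).

Definition trans (A : Mat) : Mat := fun i j => A j i.

Definition Diag (s : nat -> R) : Mat :=
  fun i j => if Nat.eq_dec i j then s i else 0.

Definition mat_eq (m n : nat) (A B : Mat) : Prop :=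
  forall i j, (i < m)%nat -> (j < n)%nat -> A i j = B i j.

Definition orthogonal (k : nat) (U : Mat) : Prop :=
  forall i j, (i < k)%nat -> (j < k)%nat ->
    mmul k (trans U) U i j = if Nat.eq_dec i j then 1 else 0.

Definition svd_mat (m n : nat) (U : Mat) (s : nat -> R) (V : Mat) : Mat :=
  mmul n (mmul m U (Diag s)) (trans V).

Definition is_svd (m n : nat) (X U : Mat) (s : nat -> R) (V : Mat) : Prop :=
  orthogonal m U /\ orthogonal n V /\
  (forall i, (i < m)%nat -> 0 <= s i) /\
  (forall i j, (i <= j)%nat -> (j < m)%nat -> s j <= s i) /\
  mat_eq m n X (svd_mat m n U s V).

Definition singvals (m n : nat) (X : Mat) (s : nat -> R) : Prop :=
  exists U V, is_svd m n X U s V.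

Definition rho (a x : R) : R := (a + 1) * x / (a + x).

(* T(X) = sum_{i <= rank X} rho_a(sigma_i(X)) = sum over the nonzero
   singular values (rank X = number of nonzero singular values). *)
Definition Tpen (a : R) (m : nat) (s : nat -> R) : R :=
  rsum m (fun i => if Rlt_dec 0 (s i) then rho a (s i) else 0).

Definition fro2 (m n : nat) (A : Mat) : R :=
  rsum m (fun i => rsum n (fun j => (A i j) ^ 2)).

Definition msub (A B : Mat) : Mat := fun i j => A i j - B i j.

Definition sgn (x : R) : R :=
  if Rlt_dec 0 x then 1 else if Rlt_dec x 0 then -1 else 0.

Definition phi (lam a x : R) : R :=
  acos (1 - 27 * lam * a * (a + 1) / (2 * (a + Rabs x) ^ 3)).

Definition h (lam a x : R) : R :=
  sgn x * (2 / 3 * (a + Rabs x) * cos (phi lam a x / 3) - 2 * a / 3 + Rabs x / 3).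

Definition thr (lam a : R) : R :=
  if Rle_dec lam (a ^ 2 / (2 * (a + 1))) then lam * (a + 1) / a
  else sqrt (2 * lam * (a + 1)) - a / 2.

Definition g (lam a w : R) : R :=
  if Rle_dec (Rabs w) (thr lam a) then 0 else h lam a w.

Definition obj (m n : nat) (lam a : R) (Y X : Mat) (sX : nat -> R) : R :=
  / 2 * fro2 m n (msub X Y) + lam * Tpen a m sX.

(* Main.v *)
Require Import Defs.
From Stdlib Require Import Arith Reals Lra Psatz Lia.
Open Scope R_scope.

Lemma cos3 t : cos (3*t) = 4 * cos t ^ 3 - 3 * cos t.
Proof.
  replace (3*t) with (2*t + t) by ring.
  rewrite cos_plus, cos_2a, sin_2a.
  pose proof (sin2 t) as H. unfold Rsqr in H.
  replace (sin t ^ 3) with (sin t * (sin t * sin t)) by ring.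
  replace (2 * sin t * cos t * sin t) with (2 * cos t * (sin t * sin t)) by ring.
  rewrite H. ring.
Qed.

Lemma trig_root (v : R) : -1 <= v <= 1 ->
  let u := cos (acos v / 3) in 1/2 <= u <= 1 /\ 4 * u^3 - 3 * u = v.
Proof.
  intros Hv u. pose proof (acos_bound v) as [B1 B2].
  pose proof PI_RGT_0.
  split.
  - split.
    + rewrite <- cos_PI3. unfold u. apply cos_decr_1; lra.
    + apply COS_bound.
  - unfold u. rewrite <- cos3. replace (3 * (acos v / 3)) with (acos v) by field.
    apply cos_acos; auto.
Qed.

Definition pen (a y : R) := if Rlt_dec 0 y then rho a y else 0.

Lemma thr_pos lam a : 0 < a -> 0 < lam -> 0 < thr lam a.
Proof.
  intros Ha Hl. unfold thr. destruct (Rle_dec _ _).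
  - apply Rdiv_lt_0_compat; nra.
  - assert (a^2 < 2*lam*(a+1)).
    { apply Rnot_le_lt in n. apply Rmult_lt_compat_r with (r := 2*(a+1)) in n; [|lra].
      replace (a ^ 2 / (2 * (a + 1)) * (2 * (a + 1))) with (a^2) in n by (field; lra). lra. }
    assert (a < sqrt (2*lam*(a+1))).
    { pose proof (sqrt_pos (2*lam*(a+1))).
      pose proof (sqrt_sqrt (2*lam*(a+1))). nra. }
    lra.
Qed.

Lemma thr_big lam a x : 0 < a -> 0 < lam -> thr lam a < x ->
  2*lam*(a+1) <= (x + a/2)^2.
Proof.
  intros Ha Hl Hx. unfold thr in Hx. destruct (Rle_dec _ _).
  - (* lam(a+1)/a + a/2 >= sqrt(2 lam (a+1)) *)
    replace (2*lam*(a+1)) with (2*(lam*(a+1))) by ring.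
    set (s := lam*(a+1)) in *.
    assert (Hs : s / a < x) by (unfold s in *; lra).
    assert (0 < s) by (unfold s in *; nra). clearbody s.
    assert (2 * s <= (s/a + a/2)^2).
    { replace ((s/a + a/2)^2) with ((s/a - a/2)^2 + 2*s) by (field; lra). pose proof (pow2_ge_0 (s/a - a/2)); lra. }
    assert (0 < s/a) by (apply Rdiv_lt_0_compat; lra).
    nra.
  - assert (0 <= 2*lam*(a+1)) by nra.
    assert (sqrt (2*lam*(a+1)) < x + a/2) by lra.
    pose proof (sqrt_pos (2*lam*(a+1))).
    pose proof (sqrt_sqrt (2*lam*(a+1)) H). nra.
Qed.

Lemma g_zero_case lam a x y : 0 < a -> 0 < lam -> 0 <= x -> x <= thr lam a -> 0 <= y ->
  / 2 * (0 - x)^2 <= / 2 * (y - x)^2 + lam * pen a y.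
Proof.
  intros Ha Hl Hx Ht Hy. unfold pen. destruct (Rlt_dec 0 y); [|nra].
  unfold rho.
  assert (key : 0 <= y * (y + a - 2*x) + 2 * (lam*(a+1) - a*x) \/
                0 <= y^2 + (a - 2*x)*y + 2*lam*(a+1) - 2*a*x).
  { unfold thr in Ht. destruct (Rle_dec _ _).
    - left. assert (x * a <= lam*(a+1)).
      { apply (Rmult_le_compat_r a) in Ht; [|lra]. replace (lam * (a + 1) / a * a) with (lam*(a+1)) in Ht by (field; lra). lra. }
      assert (lam*(a+1) <= a^2/2).
      { apply (Rmult_le_compat_r (2*(a+1))) in r0; [|lra]. replace (a ^ 2 / (2 * (a + 1)) * (2 * (a + 1))) with (a^2) in r0 by (field; lra). lra. }
      nra.
    - right.
      assert (0 <= 2*lam*(a+1)) by nra.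
      pose proof (sqrt_pos (2*lam*(a+1))).
      pose proof (sqrt_sqrt (2*lam*(a+1)) H).
      assert (x + a/2 <= sqrt (2*lam*(a+1))) by lra.
      assert ((x+a/2)^2 <= 2*lam*(a+1)) by nra.
      pose proof (pow2_ge_0 (y-x+a/2)); nra. }
  assert (E : / 2 * (y - x)^2 + lam * ((a+1)*y/(a+y)) - / 2 * (0 - x)^2
             = y * (y^2 + (a - 2*x)*y + 2*lam*(a+1) - 2*a*x) / (2*(a+y))).
  { field. lra. }
  assert (0 <= y * (y^2 + (a - 2*x)*y + 2*lam*(a+1) - 2*a*x) / (2*(a+y))).
  { apply Rmult_le_pos; [|left; apply Rinv_0_lt_compat; lra].
    apply Rmult_le_pos; [lra|]. destruct key; nra. }
  lra.
Qed.

Lemma pen_pos a y : 0 < a -> 0 <= y -> pen a y = (a+1)*y/(a+y).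
Proof.
  intros Ha Hy. unfold pen, rho. destruct (Rlt_dec 0 y); auto.
  assert (y = 0) by lra. subst. field. lra.
Qed.

Lemma T_mono u w : 1/2 <= u -> u < w -> 4*u^3 - 3*u < 4*w^3 - 3*w.
Proof.
  intros. assert (4*w^3 - 3*w - (4*u^3 - 3*u) = (w-u)*(4*(w*w+w*u+u*u) - 3)) by ring.
  assert (0 < 4*(w*w+w*u+u*u) - 3) by nra.
  assert (0 < (w-u)*(4*(w*w+w*u+u*u) - 3)) by (apply Rmult_lt_0_compat; lra).
  lra.
Qed.

Lemma g_pos_case lam a x : 0 < a -> 0 < lam -> thr lam a < x ->
  0 <= g lam a x /\
  forall y, 0 <= y ->
  / 2 * (g lam a x - x)^2 + lam * pen a (g lam a x) <= / 2 * (y - x)^2 + lam * pen a y.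
Proof.
  intros Ha Hl Hx.
  pose proof (thr_pos lam a Ha Hl) as Htp.
  pose proof (thr_big lam a x Ha Hl Hx) as Hbig.
  set (p := a + x). set (c := lam*a*(a+1)).
  assert (Hp : a < p) by (unfold p; lra).
  assert (Hc : 0 < c) by (unfold c; apply Rmult_lt_0_compat; nra).
  set (v := 1 - 27 * c / (2 * p^3)).
  assert (Hp3 : 0 < p^3) by (apply pow_lt; lra).
  set (u0 := 1 - 3*a/(4*p)).
  set (w0 := p - a/2).
  assert (Hq0 : w0^3 - p*w0^2 + c <= 0).
  { unfold w0, c, p.
    replace ((a + x - a / 2) ^ 3 - (a + x) * (a + x - a / 2) ^ 2) with (- (a/2) * (x+a/2)^2) by field.
    assert (a/2*(2*lam*(a+1)) <= a/2*(x+a/2)^2) by (apply Rmult_le_compat_l; lra).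
    lra. }
  assert (Ew0 : w0 = p/3 * (1 + 2*u0)) by (unfold w0, u0; field; lra).
  assert (Qform : forall uu, (p/3*(1+2*uu))^3 - p*(p/3*(1+2*uu))^2 + c
                    = 2*p^3/27 * ((4*uu^3 - 3*uu) - v)).
  { intro uu. unfold v. field. lra. }
  assert (Hv0 : 4*u0^3 - 3*u0 <= v).
  { rewrite Ew0, Qform in Hq0.
    assert (0 < 2*p^3/27) by lra. nra. }
  assert (Hu0 : 0 <= u0).
  { unfold u0. assert (3*a/(4*p) <= 3/4).
    { apply (Rmult_le_reg_r (4*p)); [lra|]. replace (3*a/(4*p)*(4*p)) with (3*a) by (field; lra). lra. }
    lra. }
  assert (Hv : -1 <= v <= 1).
  { split.
    - assert (4*u0^3 - 3*u0 + 1 = (u0+1)*((2*u0-1)*(2*u0-1))) by ring.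
      assert (0 <= (u0+1)*((2*u0-1)*(2*u0-1))) by (apply Rmult_le_pos; [lra | apply Rle_0_sqr]).
      lra.
    - unfold v. assert (0 <= 27 * c / (2 * p^3)).
      { apply Rmult_le_pos; [lra|]. left; apply Rinv_0_lt_compat; lra. }
      lra. }
  destruct (trig_root v Hv) as [[Hu1 Hu2] Hu].
  set (u := cos (acos v / 3)) in *.
  set (z := p/3*(1+2*u)).
  assert (Hqz : z^3 - p*z^2 + c = 0).
  { unfold z. rewrite Qform. rewrite Hu. ring. }
  assert (Lz : forall w, w^3 - p*w^2 + c <= 0 -> w <= z).
  { intros w Hw. destruct (Rle_lt_dec w z) as [|Hlt]; auto. exfalso.
    set (uw := (3*w/p - 1)/2).
    assert (Ew : w = p/3*(1+2*uw)) by (unfold uw; field; lra).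
    rewrite Ew, Qform in Hw.
    assert (u < uw).
    { unfold z in Hlt. rewrite Ew in Hlt. nra. }
    pose proof (T_mono u uw Hu1 H). rewrite Hu in H0.
    assert (0 < 2*p^3/27) by lra. nra. }
  assert (Hzw0 : w0 <= z) by (apply Lz; exact Hq0).
  assert (Hxpos : 0 < x) by lra.
  assert (Hg : g lam a x = z - a).
  { unfold g. destruct (Rle_dec (Rabs x) (thr lam a)).
    - rewrite Rabs_right in r; lra.
    - unfold h, phi. unfold sgn. destruct (Rlt_dec 0 x); [|lra].
      rewrite Rabs_right by lra. fold p. fold c.
      replace (27 * lam * a * (a + 1)) with (27 * c) by (unfold c; ring).
      fold v. fold u. unfold z, p. field. }
  assert (Hza : a <= z).
  { unfold thr in Hx. destruct (Rle_dec _ _).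
    - apply Lz. assert (lam*(a+1)/a*a < x*a) by (apply Rmult_lt_compat_r; lra).
      replace (lam*(a+1)/a*a) with (lam*(a+1)) in H by (field; lra).
      replace (a^3 - p*a^2 + c) with (a*(lam*(a+1) - x*a)) by (unfold p, c; ring).
      nra.
    - assert (a^2 < 2*lam*(a+1)).
      { apply Rnot_le_lt in n. apply Rmult_lt_compat_r with (r := 2*(a+1)) in n; [|lra].
        replace (a ^ 2 / (2 * (a + 1)) * (2 * (a + 1))) with (a^2) in n by (field; lra). lra. }
      pose proof (sqrt_pos (2*lam*(a+1))).
      pose proof (sqrt_sqrt (2*lam*(a+1))).
      assert (a < sqrt (2*lam*(a+1))) by nra.
      unfold w0, p in Hzw0. lra. }
  split.
  - rewrite Hg. lra.
  - intros y Hy. rewrite Hg. rewrite !pen_pos by lra.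
    set (w := a + y).
    assert (E : / 2 * (y - x)^2 + lam * ((a+1)*y/(a+y)) -
                (/ 2 * (z - a - x)^2 + lam * ((a+1)*(z-a)/(a+(z-a))))
              = (w-z)^2*(w+2*z-2*p)/(2*w) + (w-z)/(w*z) * (z^3 - p*z^2 + c)).
    { unfold w, p, c. field. lra. }
    rewrite Hqz in E.
    assert (0 <= (w-z)^2*(w+2*z-2*p)/(2*w)).
    { apply Rmult_le_pos; [|left; apply Rinv_0_lt_compat; unfold w; lra].
      apply Rmult_le_pos; [apply pow2_ge_0|]. unfold w, w0 in *. lra. }
    rewrite Rmult_0_r, Rplus_0_r in E. unfold w in *. lra.
Qed.

Lemma g_min lam a x : 0 < a -> 0 < lam -> 0 <= x ->
  0 <= g lam a x /\
  forall y, 0 <= y ->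
  / 2 * (g lam a x - x)^2 + lam * pen a (g lam a x) <= / 2 * (y - x)^2 + lam * pen a y.
Proof.
  intros Ha Hl Hx. destruct (Rle_lt_dec x (thr lam a)) as [Hle|Hlt].
  - assert (E : g lam a x = 0).
    { unfold g. destruct (Rle_dec _ _); auto. rewrite Rabs_right in n; lra. }
    rewrite E. split; [lra|]. intros y Hy.
    assert (pen a 0 = 0) by (unfold pen; destruct (Rlt_dec 0 0); lra).
    rewrite H, Rmult_0_r, Rplus_0_r. apply g_zero_case; auto.
  - apply g_pos_case; auto.
Qed.

Lemma g_mono lam a x1 x2 : 0 < a -> 0 < lam -> 0 <= x1 -> x1 <= x2 ->
  g lam a x1 <= g lam a x2.
Proof.
  intros Ha Hl H1 H12.
  destruct (g_min lam a x1 Ha Hl H1) as [G1 M1].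
  destruct (g_min lam a x2 Ha Hl ltac:(lra)) as [G2 M2].
  specialize (M1 _ G2). specialize (M2 _ G1).
  destruct (Rle_lt_dec (g lam a x1) (g lam a x2)); auto.
  exfalso. destruct (Req_dec x1 x2).
  - subst. lra.
  - assert (0 < (g lam a x1 - g lam a x2) * (x2 - x1)) by (apply Rmult_lt_0_compat; lra).
    nra.
Qed.

Lemma rsum_ext n f g : (forall i, (i < n)%nat -> f i = g i) -> rsum n f = rsum n g.
Proof.
  induction n; intros H; simpl; auto.
  rewrite IHn by (intros; apply H; lia). rewrite H by lia. auto.
Qed.

Lemma rsum_le n f g : (forall i, (i < n)%nat -> f i <= g i) -> rsum n f <= rsum n g.
Proof.
  induction n; intros H; simpl; [lra|].
  assert (rsum n f <= rsum n g) by (apply IHn; intros; apply H; lia).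
  assert (f n <= g n) by (apply H; lia). lra.
Qed.

Lemma rsum_nonneg n f : (forall i, (i < n)%nat -> 0 <= f i) -> 0 <= rsum n f.
Proof.
  intros H. replace 0 with (rsum n (fun _ => 0)).
  - apply rsum_le; auto.
  - induction n; simpl; auto. rewrite IHn; [lra|]. intros; apply H; lia.
Qed.

Lemma rsum_plus n f g : rsum n (fun i => f i + g i) = rsum n f + rsum n g.
Proof. induction n; simpl; [lra|]. rewrite IHn. ring. Qed.

Lemma rsum_scal n c f : rsum n (fun i => c * f i) = c * rsum n f.
Proof. induction n; simpl; [ring|]. rewrite IHn. ring. Qed.

Lemma rsum_scal_r n c f : rsum n (fun i => f i * c) = rsum n f * c.
Proof. induction n; simpl; [ring|]. rewrite IHn. ring. Qed.

Lemma rsum_swap n m (F : nat -> nat -> R) :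
  rsum n (fun i => rsum m (fun j => F i j)) = rsum m (fun j => rsum n (fun i => F i j)).
Proof.
  induction n; simpl.
  - induction m; simpl; auto. rewrite <- IHm. ring.
  - rewrite IHn. rewrite <- rsum_plus. auto.
Qed.

Lemma rsum_ite_r n k f :
  rsum n (fun l => if Nat.eq_dec k l then f l else 0) = if lt_dec k n then f k else 0.
Proof.
  induction n; simpl.
  - destruct (lt_dec k 0); [lia|auto].
  - rewrite IHn. destruct (Nat.eq_dec k n); destruct (lt_dec k n); destruct (lt_dec k (S n));
      subst; try lia; try ring.
Qed.

Lemma rsum_ite_l n k f :
  rsum n (fun l => if Nat.eq_dec l k then f l else 0) = if lt_dec k n then f k else 0.
Proof.
  rewrite <- rsum_ite_r. apply rsum_ext. intros.
  destruct (Nat.eq_dec i k); destruct (Nat.eq_dec k i); subst; auto; lia.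
Qed.

Lemma rsum_tail m n f : (m <= n)%nat -> (forall i, (m <= i)%nat -> (i < n)%nat -> f i = 0) ->
  rsum n f = rsum m f.
Proof.
  intros Hmn. induction Hmn; intros H; auto.
  simpl. rewrite IHHmn by (intros; apply H; lia). rewrite H by lia. ring.
Qed.

Lemma rsum_mult n m f g :
  rsum n f * rsum m g = rsum n (fun i => rsum m (fun j => f i * g j)).
Proof.
  rewrite <- rsum_scal_r. apply rsum_ext. intros. rewrite <- rsum_scal. auto.
Qed.

Lemma rsum_zero_each n f : (forall i, (i < n)%nat -> 0 <= f i) -> rsum n f <= 0 ->
  forall i, (i < n)%nat -> f i = 0.
Proof.
  induction n; intros H S i Hi; [lia|]. simpl in S.
  assert (0 <= rsum n f) by (apply rsum_nonneg; intros; apply H; lia).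
  assert (0 <= f n) by (apply H; lia).
  destruct (Nat.eq_dec i n).
  - subst; lra.
  - apply IHn; try lra; try lia. intros; apply H; lia.
Qed.

Definition E (m : nat) (U : Mat) (s : nat -> R) (V : Mat) : Mat :=
  fun i j => rsum m (fun k => U i k * s k * V j k).

Lemma svd_entry m n U s V : (m <= n)%nat -> forall i j,
  svd_mat m n U s V i j = E m U s V i j.
Proof.
  intros Hmn i j. unfold svd_mat, mmul, trans, Diag, E.
  transitivity (rsum n (fun l => if lt_dec l m then U i l * s l * V j l else 0)).
  - apply rsum_ext. intros l Hl.
    transitivity (rsum m (fun k => if Nat.eq_dec k l then U i k * s k else 0) * V j l).
    + f_equal. apply rsum_ext. intros k Hk. destruct (Nat.eq_dec k l); ring.
    + rewrite rsum_ite_l. destruct (lt_dec l m); ring.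
  - rewrite (rsum_tail m n) by (auto; intros; destruct (lt_dec i0 m); auto; lia).
    apply rsum_ext. intros k Hk. destruct (lt_dec k m); auto; lia.
Qed.

Definition ip (m n : nat) (A B : Mat) : R :=
  rsum m (fun i => rsum n (fun j => A i j * B i j)).

Lemma ip_ext m n A A' B B' : mat_eq m n A A' -> mat_eq m n B B' -> ip m n A B = ip m n A' B'.
Proof.
  intros H1 H2. unfold ip. apply rsum_ext. intros. apply rsum_ext. intros.
  rewrite H1, H2; auto.
Qed.

Lemma fro2_ip m n X Y : fro2 m n (msub X Y) = ip m n X X - 2 * ip m n X Y + ip m n Y Y.
Proof.
  unfold fro2, msub, ip.
  transitivity (rsum m (fun i => rsum n (fun j => X i j * X i j) + (-2) * rsum n (fun j => X i j * Y i j)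
     + rsum n (fun j => Y i j * Y i j))).
  - apply rsum_ext. intros. rewrite <- rsum_scal, <- !rsum_plus. apply rsum_ext. intros. ring.
  - rewrite !rsum_plus, rsum_scal. ring.
Qed.

Definition Am m (U P : Mat) k l := rsum m (fun a => U a k * P a l).

Lemma ip_E m n U s V P r Q :
  ip m n (E m U s V) (E m P r Q) =
  rsum m (fun k => rsum m (fun l => s k * r l * (Am m U P k l * Am n V Q k l))).
Proof.
  unfold ip, E, Am.
  transitivity (rsum m (fun a => rsum n (fun b => rsum m (fun k => rsum m (fun l =>
     U a k * s k * V b k * (P a l * r l * Q b l)))))).
  { apply rsum_ext; intros; apply rsum_ext; intros. apply rsum_mult. }
  transitivity (rsum m (fun a => rsum m (fun k => rsum m (fun l => rsum n (fun b =>
     U a k * s k * V b k * (P a l * r l * Q b l)))))).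
  { apply rsum_ext; intros. rewrite rsum_swap. apply rsum_ext; intros. apply rsum_swap. }
  rewrite rsum_swap. apply rsum_ext; intros k Hk. rewrite rsum_swap.
  apply rsum_ext; intros l Hl. rewrite rsum_mult.
  rewrite <- rsum_scal. apply rsum_ext; intros a Ha.
  rewrite <- rsum_scal. apply rsum_ext; intros b Hb. ring.
Qed.

Lemma Am_orth m k U : orthogonal k U -> (m <= k)%nat -> forall i j, (i < m)%nat -> (j < m)%nat ->
  Am k U U i j = if Nat.eq_dec i j then 1 else 0.
Proof. intros H Hm i j Hi Hj. rewrite <- H by lia. reflexivity. Qed.

Lemma ip_same m n U s V r : (m <= n)%nat -> orthogonal m U -> orthogonal n V ->
  ip m n (E m U s V) (E m U r V) = rsum m (fun k => s k * r k).
Proof.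
  intros Hmn HU HV. rewrite ip_E. apply rsum_ext. intros k Hk.
  transitivity (rsum m (fun l => if Nat.eq_dec k l then s k * r l else 0)).
  - apply rsum_ext; intros l Hl. rewrite (Am_orth m m U HU), (Am_orth m n V HV) by lia.
    destruct (Nat.eq_dec k l); ring.
  - rewrite rsum_ite_r. destruct (lt_dec k m); auto; lia.
Qed.

Lemma bessel N K (p : Mat) (x : nat -> R) :
  (forall l l', (l < K)%nat -> (l' < K)%nat ->
     rsum N (fun a => p a l * p a l') = if Nat.eq_dec l l' then 1 else 0) ->
  rsum K (fun l => (rsum N (fun a => x a * p a l))^2) <= rsum N (fun a => x a * x a).
Proof.
  intros Hp.
  set (c := fun l => rsum N (fun a => x a * p a l)).
  set (e := fun a => rsum K (fun l => c l * p a l)).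
  assert (H0 : 0 <= rsum N (fun a => (x a - e a)^2)) by (apply rsum_nonneg; intros; apply pow2_ge_0).
  assert (E1 : rsum N (fun a => x a * e a) = rsum K (fun l => c l * c l)).
  { unfold e. transitivity (rsum N (fun a => rsum K (fun l => c l * (x a * p a l)))).
    - apply rsum_ext; intros. rewrite <- rsum_scal. apply rsum_ext; intros. ring.
    - rewrite rsum_swap. apply rsum_ext; intros. rewrite rsum_scal. auto. }
  assert (E2 : rsum N (fun a => e a * e a) = rsum K (fun l => c l * c l)).
  { unfold e. transitivity (rsum N (fun a => rsum K (fun l => rsum K (fun l' =>
        c l * c l' * (p a l * p a l'))))).
    - apply rsum_ext; intros. rewrite rsum_mult. apply rsum_ext; intros.
      apply rsum_ext; intros. ring.
    - rewrite rsum_swap. apply rsum_ext; intros l Hl. rewrite rsum_swap.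
      transitivity (rsum K (fun l' => if Nat.eq_dec l l' then c l * c l' else 0)).
      + apply rsum_ext; intros l' Hl'. rewrite rsum_scal, Hp by auto.
        destruct (Nat.eq_dec l l'); ring.
      + rewrite rsum_ite_r. destruct (lt_dec l K); [subst; auto|lia]. }
  assert (E3 : rsum N (fun a => (x a - e a)^2) =
     rsum N (fun a => x a * x a) - 2 * rsum N (fun a => x a * e a) + rsum N (fun a => e a * e a)).
  { transitivity (rsum N (fun a => x a * x a + (-2) * (x a * e a) + e a * e a)).
    - apply rsum_ext; intros; ring.
    - rewrite !rsum_plus, rsum_scal. ring. }
  assert (E4 : rsum K (fun l => (rsum N (fun a => x a * p a l))^2) = rsum K (fun l => c l * c l)).
  { apply rsum_ext; intros. unfold c. ring. }
  lra.
Qed.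

Lemma rsum_S n f : rsum (S n) f = rsum n f + f n.
Proof. reflexivity. Qed.

Lemma rsum_zero n : rsum n (fun _ => 0) = 0.
Proof. induction n; simpl; auto. rewrite IHn; ring. Qed.

Lemma decomp M (s r : nat -> R) (N : Mat) c d :
  rsum M (fun k => rsum M (fun l => s k * r l * N k l)) =
  rsum M (fun k => rsum M (fun l => (s k - c) * (r l - d) * N k l))
  + d * rsum M (fun k => (s k - c) * rsum M (fun l => N k l))
  + c * rsum M (fun l => r l * rsum M (fun k => N k l)).
Proof.
  transitivity (rsum M (fun k => rsum M (fun l => (s k - c) * (r l - d) * N k l)
     + d * ((s k - c) * rsum M (fun l => N k l)) + rsum M (fun l => c * (r l * N k l)))).
  - apply rsum_ext; intros. rewrite !rsum_scal. rewrite <- !rsum_scal. rewrite <- !rsum_plus.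
    apply rsum_ext; intros. ring.
  - rewrite !rsum_plus. rewrite rsum_scal. f_equal.
    rewrite rsum_swap. rewrite <- rsum_scal. apply rsum_ext; intros.
    rewrite rsum_scal, rsum_scal. auto.
Qed.

Lemma comb m : forall (s r : nat -> R) (N : Mat),
  (forall i, (i < m)%nat -> 0 <= s i) ->
  (forall i j, (i <= j)%nat -> (j < m)%nat -> s j <= s i) ->
  (forall i, (i < m)%nat -> 0 <= r i) ->
  (forall i j, (i <= j)%nat -> (j < m)%nat -> r j <= r i) ->
  (forall k l, (k < m)%nat -> (l < m)%nat -> 0 <= N k l) ->
  (forall k, (k < m)%nat -> rsum m (fun l => N k l) <= 1) ->
  (forall l, (l < m)%nat -> rsum m (fun k => N k l) <= 1) ->
  rsum m (fun k => rsum m (fun l => s k * r l * N k l)) <= rsum m (fun k => s k * r k).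
Proof.
  induction m; intros s r N Hs Hss Hr Hrs HN Hrow Hcol; [simpl; lra|].
  set (c := s m). set (d := r m).
  assert (Hc : 0 <= c) by (apply Hs; lia).
  assert (Hd : 0 <= d) by (apply Hr; lia).
  rewrite (decomp (S m) s r N c d).
  assert (R1 : rsum (S m) (fun k => s k * r k) =
     rsum (S m) (fun k => (s k - c) * (r k - d))
     + d * rsum (S m) (fun k => (s k - c)) + c * rsum (S m) (fun l => r l)).
  { rewrite <- !rsum_scal, <- !rsum_plus. apply rsum_ext; intros. ring. }
  rewrite R1.
  assert (B1 : rsum (S m) (fun k => (s k - c) * rsum (S m) (fun l => N k l))
               <= rsum (S m) (fun k => (s k - c))).
  { apply rsum_le; intros k Hk. assert (0 <= s k - c) by (unfold c; pose proof (Hss k m ltac:(lia) ltac:(lia)); lra).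
    pose proof (Hrow k Hk). nra. }
  assert (B2 : rsum (S m) (fun l => r l * rsum (S m) (fun k => N k l)) <= rsum (S m) (fun l => r l)).
  { apply rsum_le; intros l Hl. pose proof (Hr l Hl). pose proof (Hcol l Hl). nra. }
  assert (B3 : rsum (S m) (fun k => rsum (S m) (fun l => (s k - c) * (r l - d) * N k l))
      <= rsum (S m) (fun k => (s k - c) * (r k - d))).
  { assert (Z1 : rsum (S m) (fun k => rsum (S m) (fun l => (s k - c) * (r l - d) * N k l))
       = rsum m (fun k => rsum m (fun l => (s k - s m) * (r l - d) * N k l))).
    { rewrite rsum_S. cbv beta.
      rewrite (rsum_ext (S m) (fun l => (s m - c) * (r l - d) * N m l) (fun _ => 0))
        by (intros; unfold c; ring).
      rewrite rsum_zero. rewrite Rplus_0_r. apply rsum_ext; intros.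
      rewrite rsum_S. unfold c, d. ring. }
    assert (Z2 : rsum (S m) (fun k => (s k - c) * (r k - d)) = rsum m (fun k => (s k - s m) * (r k - d))).
    { rewrite rsum_S. unfold c, d. ring. }
    rewrite Z1, Z2.
    assert (IH := IHm (fun k => s k - s m) (fun k => r k - d) N).
    cbv beta in IH.
    assert (rsum m (fun k => rsum m (fun l => (s k - s m) * (r l - d) * N k l)) <=
            rsum m (fun k => (s k - s m) * (r k - d))).
    { apply IH.
      - intros i Hi. pose proof (Hss i m ltac:(lia) ltac:(lia)). lra.
      - intros i j Hij Hj. pose proof (Hss i j Hij ltac:(lia)). lra.
      - intros i Hi. pose proof (Hrs i m ltac:(lia) ltac:(lia)). unfold d. lra.
      - intros i j Hij Hj. pose proof (Hrs i j Hij ltac:(lia)). lra.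
      - intros; apply HN; lia.
      - intros k Hk. apply Rle_trans with (rsum (S m) (fun l => N k l)); [|apply Hrow; lia].
        simpl. assert (0 <= N k m) by (apply HN; lia). lra.
      - intros l Hl. apply Rle_trans with (rsum (S m) (fun k => N k l)); [|apply Hcol; lia].
        simpl. assert (0 <= N m l) by (apply HN; lia). lra. }
    lra. }
  assert (d * rsum (S m) (fun k => (s k - c) * rsum (S m) (fun l => N k l)) <=
          d * rsum (S m) (fun k => (s k - c))) by (apply Rmult_le_compat_l; auto).
  assert (c * rsum (S m) (fun l => r l * rsum (S m) (fun k => N k l)) <=
          c * rsum (S m) (fun l => r l)) by (apply Rmult_le_compat_l; auto).
  lra.
Qed.

Lemma orth_col k U : orthogonal k U -> forall i j, (i < k)%nat -> (j < k)%nat ->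
  rsum k (fun a => U a i * U a j) = if Nat.eq_dec i j then 1 else 0.
Proof. intros H i j Hi Hj. apply H; auto. Qed.

Lemma abs_prod_le x y : Rabs (x * y) <= (x^2 + y^2)/2.
Proof.
  pose proof (pow2_ge_0 (x-y)). pose proof (pow2_ge_0 (x+y)).
  unfold Rabs. destruct (Rcase_abs (x*y)); nra.
Qed.

Lemma row_bessel m n U P : (m <= n)%nat -> orthogonal n U -> orthogonal n P ->
  forall k, (k < n)%nat -> rsum m (fun l => (Am n U P k l)^2) <= 1.
Proof.
  intros Hmn HU HP k Hk. unfold Am.
  eapply Rle_trans.
  - apply (bessel n m P (fun a => U a k)). intros; apply orth_col; auto; lia.
  - rewrite orth_col by auto. destruct (Nat.eq_dec k k); lra.
Qed.

Lemma col_bessel m n U P : (m <= n)%nat -> orthogonal n U -> orthogonal n P ->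
  forall l, (l < n)%nat -> rsum m (fun k => (Am n U P k l)^2) <= 1.
Proof.
  intros Hmn HU HP l Hl.
  replace (rsum m (fun k => (Am n U P k l)^2)) with (rsum m (fun k => (Am n P U l k)^2)).
  - apply row_bessel; auto.
  - apply rsum_ext; intros. unfold Am. f_equal. apply rsum_ext; intros; ring.
Qed.

Lemma vn m n U s V P r Q : (m <= n)%nat -> orthogonal m U -> orthogonal m P ->
  orthogonal n V -> orthogonal n Q ->
  (forall i, (i < m)%nat -> 0 <= s i) ->
  (forall i j, (i <= j)%nat -> (j < m)%nat -> s j <= s i) ->
  (forall i, (i < m)%nat -> 0 <= r i) ->
  (forall i j, (i <= j)%nat -> (j < m)%nat -> r j <= r i) ->
  ip m n (E m U s V) (E m P r Q) <= rsum m (fun k => s k * r k).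
Proof.
  intros Hmn HU HP HV HQ Hs Hss Hr Hrs. rewrite ip_E.
  set (N := fun k l => Rabs (Am m U P k l * Am n V Q k l)).
  apply Rle_trans with (rsum m (fun k => rsum m (fun l => s k * r l * N k l))).
  - apply rsum_le; intros k Hk; apply rsum_le; intros l Hl. unfold N.
    apply Rmult_le_compat_l; [apply Rmult_le_pos; auto|apply Rle_abs].
  - apply comb; auto.
    + intros; unfold N; apply Rabs_pos.
    + intros k Hk. apply Rle_trans with (rsum m (fun l => ((Am m U P k l)^2 + (Am n V Q k l)^2)/2)).
      * apply rsum_le; intros; apply abs_prod_le.
      * replace (rsum m (fun l => ((Am m U P k l)^2 + (Am n V Q k l)^2)/2)) with
          (/2 * rsum m (fun l => (Am m U P k l)^2) + /2 * rsum m (fun l => (Am n V Q k l)^2)).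
        2:{ rewrite <- !rsum_scal, <- rsum_plus. apply rsum_ext; intros. field. }
        pose proof (row_bessel m m U P (le_n m) HU HP k Hk).
        pose proof (row_bessel m n V Q Hmn HV HQ k ltac:(lia)). lra.
    + intros l Hl. apply Rle_trans with (rsum m (fun k => ((Am m U P k l)^2 + (Am n V Q k l)^2)/2)).
      * apply rsum_le; intros; apply abs_prod_le.
      * replace (rsum m (fun k => ((Am m U P k l)^2 + (Am n V Q k l)^2)/2)) with
          (/2 * rsum m (fun k => (Am m U P k l)^2) + /2 * rsum m (fun k => (Am n V Q k l)^2)).
        2:{ rewrite <- !rsum_scal, <- rsum_plus. apply rsum_ext; intros. field. }
        pose proof (col_bessel m m U P (le_n m) HU HP l Hl).
        pose proof (col_bessel m n V Q Hmn HV HQ l ltac:(lia)). lra.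
Qed.

Theorem theorem3 (m n : nat) (a lam : R) (Y U V : Mat) (sigma : nat -> R) :
  (m <= n)%nat -> 0 < a -> 0 < lam ->
  is_svd m n Y U sigma V ->
  forall sXs : nat -> R,
    singvals m n (svd_mat m n U (fun i => g lam a (sigma i)) V) sXs ->
  forall (X : Mat) (sX : nat -> R), singvals m n X sX ->
    obj m n lam a Y (svd_mat m n U (fun i => g lam a (sigma i)) V) sXs
    <= obj m n lam a Y X sX.
Proof.
  intros Hmn Ha Hl [HU [HV [Hsig [Hsigs HY]]]] r [P1 [Q1 [HP1 [HQ1 [Hr [Hrs HXs]]]]]]
    X t [P [Q [HP [HQ [Ht [Hts HX]]]]]].
  set (gs := fun i => g lam a (sigma i)) in *.
  assert (Hg0 : forall i, (i < m)%nat -> 0 <= gs i).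
  { intros i Hi. apply (g_min lam a (sigma i)); auto. }
  assert (Hgs : forall i j, (i <= j)%nat -> (j < m)%nat -> gs j <= gs i).
  { intros i j Hij Hj. apply g_mono; auto. }
  set (Xs := svd_mat m n U gs V) in *.
  assert (EXs : mat_eq m n Xs (E m U gs V)).
  { intros i j _ _. unfold Xs. apply svd_entry; auto. }
  assert (EXs1 : mat_eq m n Xs (E m P1 r Q1)).
  { intros i j Hi Hj. rewrite HXs by auto. apply svd_entry; auto. }
  assert (EY : mat_eq m n Y (E m U sigma V)).
  { intros i j Hi Hj. rewrite HY by auto. apply svd_entry; auto. }
  assert (EX : mat_eq m n X (E m P t Q)).
  { intros i j Hi Hj. rewrite HX by auto. apply svd_entry; auto. }
  assert (I1 : ip m n Xs Xs = rsum m (fun k => gs k * gs k)).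
  { rewrite (ip_ext m n _ _ _ _ EXs EXs). apply ip_same; auto. }
  assert (I2 : ip m n Xs Xs = rsum m (fun k => r k * r k)).
  { rewrite (ip_ext m n _ _ _ _ EXs1 EXs1). apply ip_same; auto. }
  assert (I3 : ip m n Xs Xs <= rsum m (fun k => gs k * r k)).
  { rewrite (ip_ext m n _ _ _ _ EXs EXs1). apply vn; auto. }
  assert (Hreq : forall k, (k < m)%nat -> r k = gs k).
  { assert (Z : forall k, (k < m)%nat -> (gs k - r k)^2 = 0).
    { apply rsum_zero_each.
      - intros; apply pow2_ge_0.
      - replace (rsum m (fun k => (gs k - r k)^2)) with
          (rsum m (fun k => gs k * gs k) + (-2) * rsum m (fun k => gs k * r k) + rsum m (fun k => r k * r k)).
        + lra.
        + rewrite <- rsum_scal, <- !rsum_plus. apply rsum_ext; intros; ring. }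
    intros k Hk. specialize (Z k Hk). assert (gs k - r k = 0) by nra. lra. }
  assert (I4 : ip m n Xs Y = rsum m (fun k => gs k * sigma k)).
  { rewrite (ip_ext m n _ _ _ _ EXs EY). apply ip_same; auto. }
  assert (I5 : ip m n Y Y = rsum m (fun k => sigma k * sigma k)).
  { rewrite (ip_ext m n _ _ _ _ EY EY). apply ip_same; auto. }
  assert (I6 : ip m n X X = rsum m (fun k => t k * t k)).
  { rewrite (ip_ext m n _ _ _ _ EX EX). apply ip_same; auto. }
  assert (I7 : ip m n X Y <= rsum m (fun k => t k * sigma k)).
  { rewrite (ip_ext m n _ _ _ _ EX EY). apply vn; auto. }
  assert (Tr : Tpen a m r = rsum m (fun k => pen a (gs k))).
  { unfold Tpen. apply rsum_ext; intros. rewrite Hreq by auto. reflexivity. }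
  assert (Tt : Tpen a m t = rsum m (fun k => pen a (t k))) by reflexivity.
  assert (L : obj m n lam a Y Xs r =
     rsum m (fun k => / 2 * (gs k - sigma k)^2 + lam * pen a (gs k))).
  { unfold obj. rewrite fro2_ip, I1, I4, I5, Tr.
    replace (rsum m (fun k => gs k * gs k) - 2 * rsum m (fun k => gs k * sigma k) + rsum m (fun k => sigma k * sigma k))
      with (rsum m (fun k => gs k * gs k) + (-2) * rsum m (fun k => gs k * sigma k) + rsum m (fun k => sigma k * sigma k)) by ring.
    rewrite <- !rsum_scal, <- !rsum_plus, <- rsum_scal, <- rsum_plus.
    apply rsum_ext; intros; ring. }
  assert (R : rsum m (fun k => / 2 * (t k - sigma k)^2 + lam * pen a (t k)) <= obj m n lam a Y X t).
  { unfold obj. rewrite fro2_ip, I6, Tt.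
    assert (Eq : rsum m (fun k => / 2 * (t k - sigma k)^2 + lam * pen a (t k)) =
       / 2 * (rsum m (fun k => t k * t k) - 2 * rsum m (fun k => t k * sigma k) + rsum m (fun k => sigma k * sigma k))
       + lam * rsum m (fun k => pen a (t k))).
    { replace (rsum m (fun k => t k * t k) - 2 * rsum m (fun k => t k * sigma k) + rsum m (fun k => sigma k * sigma k))
      with (rsum m (fun k => t k * t k) + (-2) * rsum m (fun k => t k * sigma k) + rsum m (fun k => sigma k * sigma k)) by ring.
      rewrite <- !rsum_scal, <- !rsum_plus, <- rsum_scal, <- rsum_plus.
      apply rsum_ext; intros; ring. }
    rewrite Eq. rewrite I5. lra. }
  rewrite L. eapply Rle_trans; [|exact R].
  apply rsum_le. intros k Hk.
  destruct (g_min lam a (sigma k) Ha Hl (Hsig k Hk)) as [_ M].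
  apply M. auto.
Qed.
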